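(* Let $(X,d^X)$ and $(Y,d^Y)$ be compact metric spaces, let $f$ be a homeomorphism of $X$, let $\mu$ be a Borel measure on $X$ with $\mu(X)>0$, and let $h:X\to Y$ be a homeomorphism. Then (i) $UE^{h^*(\mu)}_{h\circ f\circ h^{-1}}(Y)=h(UE^\mu_f(X))$; (ii) $Sh^{h^*(\mu)}_{h\circ f\circ h^{-1}}(Y)=h(Sh^\mu_f(X))$, where $h^*(\mu)=\mu\circ h^{-1}$ is the Borel measure on $Y$ given by $h^*(\mu)(A)=\mu(h^{-1}(A))$.
   Context: For a homeomorphism $f$ of a compact metric space $(X,d)$ and a Borel measure $\mu$ on $X$: $B(x,\epsilon)=\{y:d(x,y)<\epsilon\}$. For a point $x$, $\mathfrak{c}>0$ and $z\in B(x,\mathfrak{c})$, $\Gamma^{\mathfrak{c}}_f(z)=\{y\in B(x,\mathfrak{c}): d(f^n(y),f^n(z))\le\mathfrak{c}\ \forall n\in\mathbb{Z}\}$. $x$ is a $\mu$-uniformly expansive point of $f$ if there is $\mathfrak{c}>0$ with $\mu(\Gamma^{\mathfrak{c}}_f(z))=0$ for every $z\in B(x,\mathfrak{c})$; $UE^\mu_f(X)$ is the set of such points. A $\delta$-pseudo orbit for $f$ is $\{x_n\}_{n\in\mathbb{Z}}$ with $d(f(x_n),x_{n+1})<\delta$ for all $n$; it is through a set $B$ if $x_0\in B$; it is $\epsilon$-traced if there is $y\in X$ with $d(f^n(y),x_n)<\epsilon$ for all $n$. $x$ is a $\mu$-shadowable point of $f$ if for every $\epsilon>0$ there are $\delta>0$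 and a Borel set $B$ with $\mu(X\setminus B)=0$ such that every $\delta$-pseudo orbit for $f$ through $B\cap B(x,\delta)$ is $\epsilon$-traced by some point of $X$; $Sh^\mu_f(X)$ is the set of such points. *)

(* Defs.v *)
From HB Require Import structures.
From mathcomp Require Import all_boot all_order all_algebra.
From mathcomp Require Import all_classical all_reals all_analysis.
Set Implicit Arguments. Unset Strict Implicit. Unset Printing Implicit Defensive.
Import Order.TTheory GRing.Theory Num.Theory.
Local Open Scope classical_set_scope.
Local Open Scope ring_scope.

Section Defs.
Variable R : realType.

Definition is_metric (X : Type) (d : X -> X -> R) : Prop :=
  (forall x y, d x y = 0 <-> x = y) /\
  (forall x y, d x y = d y x) /\
  (forall x y z, d x z <= d x y + d y z).

Definition dball (X : Type) (d : X -> X -> R) (x : X) (e : R) : set X :=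
  [set y | d x y < e].

Definition dopen (X : Type) (d : X -> X -> R) (U : set X) : Prop :=
  forall x, U x -> exists e : R, 0 < e /\ dball d x e `<=` U.

Definition compact_metric (X : Type) (d : X -> X -> R) : Prop :=
  is_metric d /\
  forall F : set (set X), F `<=` dopen d -> setT `<=` \bigcup_(U in F) U ->
    exists G : set (set X), finite_set G /\ G `<=` F /\ setT `<=` \bigcup_(U in G) U.

Definition dcontinuous (X Y : Type) (dX : X -> X -> R) (dY : Y -> Y -> R)
  (g : X -> Y) : Prop :=
  forall x (e : R), 0 < e -> exists del : R, 0 < del /\
    forall y, dX x y < del -> dY (g x) (g y) < e.

Definition homeo (X Y : Type) (dX : X -> X -> R) (dY : Y -> Y -> R)
  (g : X -> Y) (ginv : Y -> X) : Prop :=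
  cancel g ginv /\ cancel ginv g /\ dcontinuous dX dY g /\ dcontinuous dY dX ginv.

Definition borel (X : Type) (d : X -> X -> R) : set (set X) :=
  <<s [set U | dopen d U] >>.

Definition borel_measure (X : Type) (d : X -> X -> R) (mu : set X -> \bar R) : Prop :=
  mu set0 = 0%E /\
  (forall A, borel d A -> (0 <= mu A)%E) /\
  (forall F : nat -> set X, (forall n, borel d (F n)) -> trivIset setT F ->
     (fun n => \sum_(0 <= i < n) mu (F i)) @ \oo --> mu (\bigcup_n F n)).

Definition pushmeasure (X Y : Type) (mu : set X -> \bar R) (h : X -> Y) : set Y -> \bar R :=
  fun A => mu (h @^-1` A).

Definition fz (X : Type) (f finv : X -> X) (n : int) : X -> X :=
  match n with
  | Posz k => iter k f
  | Negz k => iter k.+1 finv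
  end.

Definition Gamma (X : Type) (d : X -> X -> R) (f finv : X -> X) (x : X) (c : R)
  (z : X) : set X :=
  [set y | dball d x c y /\ forall n : int, d (fz f finv n y) (fz f finv n z) <= c].

Definition UE (X : Type) (d : X -> X -> R) (mu : set X -> \bar R) (f finv : X -> X) : set X :=
  [set x | exists c : R, 0 < c /\
     forall z, dball d x c z -> mu (Gamma d f finv x c z) = 0%E].

Definition pseudo_orbit (X : Type) (d : X -> X -> R) (f : X -> X) (del : R)
  (xs : int -> X) : Prop :=
  forall n : int, d (f (xs n)) (xs (n + 1)) < del.

Definition traced (X : Type) (d : X -> X -> R) (f finv : X -> X) (eps : R)
  (xs : int -> X) : Prop :=
  exists y : X, forall n : int, d (fz f finv n y) (xs n) < eps.

Definition Sh (X : Type) (d : X -> X -> R) (mu : set X -> \bar R) (f finv : X -> X) : set X :=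
  [set x | forall eps : R, 0 < eps -> exists del : R, 0 < del /\
     exists B : set X, borel d B /\ mu (~` B) = 0%E /\
       forall xs : int -> X, pseudo_orbit d f del xs ->
         B (xs 0) -> dball d x del (xs 0) -> traced d f finv eps xs].

End Defs.

(* Main.v *)
Require Import Defs.
From HB Require Import structures.
From mathcomp Require Import all_boot all_order all_algebra.
From mathcomp Require Import all_classical all_reals all_analysis.
From mathcomp Require Import lra.
Set Implicit Arguments. Unset Strict Implicit. Unset Printing Implicit Defensive.
Import Order.TTheory GRing.Theory Num.Theory.
Local Open Scope classical_set_scope.
Local Open Scope ring_scope.

Section Aux.
Variable R : realType.

Lemma d_self (X : Type) (d : X -> X -> R) x : is_metric d -> d x x = 0.
Proof. by case=> H _; apply/H. Qed.

Lemma d_ge0 (X : Type) (d : X -> X -> R) x y : is_metric d -> 0 <= d x y.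
Proof.
move=> hd; have := d_self x hd; case: hd => _ [hs ht] h0.
have := ht x y x; rewrite h0 (hs y x) => H; lra.
Qed.

Lemma dball_open (X : Type) (d : X -> X -> R) x e :
  is_metric d -> dopen d (dball d x e).
Proof.
move=> hd y; rewrite /dball /= => hy; exists (e - d x y); split; first lra.
move=> w /=; case: hd => _ [_ ht] hw; have := ht x y w; lra.
Qed.

Lemma borel_sa (X : Type) (d : X -> X -> R) : sigma_algebra setT (borel d).
Proof. rewrite /borel; exact: smallest_sigma_algebra. Qed.

Lemma borel_open (X : Type) (d : X -> X -> R) U : dopen d U -> borel d U.
Proof. by move=> hU; exact: sub_gen_smallest. Qed.

Lemma borelC (X : Type) (d : X -> X -> R) U : borel d U -> borel d (~` U).
Proof. by move=> hU; rewrite -setTD; case: (borel_sa d) => _ H _; exact: H. Qed.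

Lemma borelU (X : Type) (d : X -> X -> R) U V : borel d U -> borel d V -> borel d (U `|` V).
Proof.
move=> hU hV; case: (borel_sa d) => H0 _ H.
have -> : U `|` V = \bigcup_n (fun n => if n is 0%N then U else V) n.
  apply/seteqP; split => x /=.
    by case=> ?; [exists 0%N | exists 1%N].
  by case=> -[|n] _ /=; [left|right].
by apply: H => -[|n].
Qed.

Lemma borelI (X : Type) (d : X -> X -> R) U V : borel d U -> borel d V -> borel d (U `&` V).
Proof.
move=> hU hV; rewrite -(setCK (U `&` V)) setCI; apply: borelC.
by apply: borelU; apply: borelC.
Qed.

Lemma borel_preimage (X Y : Type) (dX : X -> X -> R) (dY : Y -> Y -> R) (h : X -> Y) A :
  dcontinuous dX dY h -> borel dY A -> borel dX (h @^-1` A).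
Proof.
move=> hc; apply: (smallest_sub (X := [set A | borel dX (h @^-1` A)])).
  split => /=.
  - by rewrite preimage_set0; case: (borel_sa dX).
  - by move=> B hB; rewrite setTD preimage_setC; apply: borelC.
  - by move=> F hF; rewrite preimage_bigcup; case: (borel_sa dX) => _ _; apply.
move=> U /= hU; apply: borel_open => x /= hx.
have [e [e0 he]] := hU _ hx.
have [del [del0 hdel]] := hc x e e0.
by exists del; split => // y /hdel /he.
Qed.


Lemma dcont_comp (X Y Z : Type) (dX : X -> X -> R) (dY : Y -> Y -> R) (dZ : Z -> Z -> R)
  (g : X -> Y) (k : Y -> Z) :
  dcontinuous dX dY g -> dcontinuous dY dZ k -> dcontinuous dX dZ (k \o g).
Proof.
move=> gc kc x e e0; have [a [a0 ha]] := kc (g x) e e0.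
have [b [b0 hb]] := gc x a a0; exists b; split => // y /hb /ha //.
Qed.

Lemma dcont_id (X : Type) (d : X -> X -> R) : dcontinuous d d id.
Proof. by move=> x e e0; exists e. Qed.

Lemma iter_cont (X : Type) (d : X -> X -> R) (f : X -> X) k :
  dcontinuous d d f -> dcontinuous d d (iter k f).
Proof.
move=> fc; elim: k => [|k IH]; first exact: dcont_id.
exact: (dcont_comp IH fc).
Qed.

Lemma fz_cont (X : Type) (d : X -> X -> R) (f finv : X -> X) n :
  dcontinuous d d f -> dcontinuous d d finv -> dcontinuous d d (fz f finv n).
Proof. by move=> fc fic; case: n => k /=; apply: iter_cont. Qed.

Lemma Gamma_borel (X : Type) (d : X -> X -> R) (f finv : X -> X) x c z :
  is_metric d -> dcontinuous d d f -> dcontinuous d d finv ->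
  borel d (Gamma d f finv x c z).
Proof.
move=> hd fc fic.
set O := [set y | exists n, c < d (fz f finv n y) (fz f finv n z)].
have -> : Gamma d f finv x c z = dball d x c `&` ~` O.
  apply/seteqP; split => y /=.
    by case=> hb hn; split => // -[n]; rewrite ltNge hn.
  case=> hb hO; split => // n; have [//|hlt] := leP (d (fz f finv n y) (fz f finv n z)) c.
  by exfalso; apply: hO; exists n.
apply: borelI; first by apply: borel_open; apply: dball_open.
apply: borelC; apply: borel_open => y [n hn].
have hr : 0 < d (fz f finv n y) (fz f finv n z) - c by rewrite subr_gt0.
have [del [del0 hdel]] := fz_cont n fc fic y hr.
exists del; split => // w /hdel hw; exists n.
case: hd => _ [_ ht]; have := ht (fz f finv n y) (fz f finv n w) (fz f finv n z); lra.
Qed.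

Lemma seq_min (T : eqType) (s : seq T) (P : T -> R -> Prop) :
  (forall t a b, 0 < a -> a <= b -> P t b -> P t a) ->
  (forall t, t \in s -> exists a, 0 < a /\ P t a) ->
  exists a, 0 < a /\ forall t, t \in s -> P t a.
Proof.
move=> Pm; elim: s => [|t s IH] H.
  by exists 1; split => // u; rewrite in_nil.
have [a [a0 Pa]] := H t (mem_head _ _).
have [b [b0 Pb]] : exists b, 0 < b /\ forall u, u \in s -> P u b.
  by apply: IH => u hu; apply: H; rewrite inE hu orbT.
exists (Order.min a b); split; first by rewrite lt_min a0 b0.
move=> u; rewrite inE => /orP[/eqP->|hu].
  by apply: (Pm _ _ a) => //; [rewrite lt_min a0 b0 | rewrite ge_min lexx].
by apply: (Pm _ _ b) => //; [rewrite lt_min a0 b0 | rewrite ge_min lexx orbT| apply: Pb].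
Qed.

Lemma unif_cont (X Y : Type) (dX : X -> X -> R) (dY : Y -> Y -> R) (g : X -> Y) :
  compact_metric dX -> is_metric dY -> dcontinuous dX dY g ->
  forall e, 0 < e -> exists del, 0 < del /\
    forall a b, dX a b < del -> dY (g a) (g b) < e.
Proof.
move=> [hX cX] hY gc e e0.
have : forall x, exists del, 0 < del /\ forall y, dX x y < del -> dY (g x) (g y) < e / 2.
  by move=> x; apply: gc; lra.
case/choice => dl hdl.
set F := [set U | exists x, U = dball dX x (dl x / 2)].
have [G [fG [GF cov]]] : exists G : set (set X), finite_set G /\ G `<=` F /\ setT `<=` \bigcup_(U in G) U.
  apply: cX.
    by move=> U [x ->]; exact: dball_open.
  move=> x _; exists (dball dX x (dl x / 2)); first by exists x.
  by rewrite /dball /= d_self //; have := (hdl x).1; lra.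
have [S GS] := finite_fsetP.1 fG.
have [eta [eta0 heta]] : exists eta, 0 < eta /\ forall U, U \in finmap.enum_fset S ->
  (fun U a => exists x, U = dball dX x (dl x / 2) /\ a <= dl x / 2) U eta.
  apply: seq_min.
- move=> U a b a0 ab [x [-> hb]]; exists x; split => //; lra.
- move=> U hU; have : G U by rewrite GS.
  move/GF => [x ->]; exists (dl x / 2); split; last by exists x.
  by have := (hdl x).1; lra.
exists eta; split => // a b hab.
have [U GU Ua] := cov a Logic.I.
have SU : U \in finmap.enum_fset S by move: GU; rewrite GS.
have [x [Ux hx]] := heta U SU.
rewrite Ux /dball /= in Ua.
have h1 := (hdl x).2 a (ltac:(lra)).
have [_ [hs ht]] := hX.
have h2 := (hdl x).2 b (ltac:(have := ht x a b; lra)).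
have [_ [hsY htY]] := hY.
have := htY (g a) (g x) (g b); rewrite (hsY (g a) (g x)); lra.
Qed.

Lemma mu_mono (X : Type) (d : X -> X -> R) (mu : set X -> \bar R) A B :
  borel_measure d mu -> borel d A -> borel d B -> A `<=` B -> (mu A <= mu B)%E.
Proof.
move=> [mu0 [mupos mucv]] hA hB AB.
pose F := fun n : nat => match n with 0%N => A | 1%N => B `\` A | _ => set0 end.
have hF : forall n, borel d (F n).
  case=> [|[|n]] //=; first by apply: borelI => //; apply: borelC.
  by case: (borel_sa d).
have tF : trivIset setT F.
  move=> i j _ _ [x [hi hj]].
  case: i hi => [|[|i]] /= hi; case: j hj => [|[|j]] /= hj //.
  - by case: hj.
  - by case: hi.
have UF : \bigcup_n F n = B.
  apply/seteqP; split => x /=.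
    by case=> -[|[|n]] _ //= => [/AB|[]].
  move=> Bx; have [ax|nax] := pselect (A x); first by exists 0%N.
  by exists 1%N.
have cv := mucv F hF tF; rewrite UF in cv.
rewrite -(cvg_lim (@ereal_hausdorff R) cv); apply: lime_ge.
  by apply/cvg_ex; exists (mu B).
near=> n.
have n1 : (0 < n)%N by near: n; exact: nbhs_infty_gt.
rewrite -(prednK n1) big_nat_recl //; apply: leeDl.
by apply: sume_ge0 => i _; apply: mupos; apply: hF.
Unshelve. all: by end_near.
Qed.


Lemma iter_conj (X Y : Type) (h : X -> Y) (hinv : Y -> X) (p : X -> X) k y :
  cancel h hinv -> cancel hinv h ->
  iter k (h \o p \o hinv) y = h (iter k p (hinv y)).
Proof.
move=> hK hiK; elim: k => [|k IH] /=; first by rewrite hiK.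
by rewrite IH hK.
Qed.

Lemma fz_conj (X Y : Type) (h : X -> Y) (hinv : Y -> X) (f finv : X -> X) n y :
  cancel h hinv -> cancel hinv h ->
  fz (h \o f \o hinv) (h \o finv \o hinv) n y = h (fz f finv n (hinv y)).
Proof. by move=> hK hiK; case: n => k; rewrite /fz; apply: iter_conj. Qed.

Lemma UE_sub (X Y : Type) (dX : X -> X -> R) (dY : Y -> Y -> R)
  (f finv : X -> X) (mu : set X -> \bar R) (h : X -> Y) (hinv : Y -> X) :
  compact_metric dX -> compact_metric dY -> homeo dX dX f finv ->
  homeo dX dY h hinv -> borel_measure dX mu ->
  h @` UE dX mu f finv `<=` UE dY (pushmeasure mu h) (h \o f \o hinv) (h \o finv \o hinv).
Proof.
move=> [hX cX] [hY cY] [_ [_ [fc fic]]] [hK [hiK [hc hic]]] bm.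
move=> _ [x [c [c0 hx]] <-].
have [c1 [c10 hc1]] := unif_cont (conj hY cY) hX hic c0.
exists (c1/2); split; first lra.
move=> z' hz'.
have gc : dcontinuous dY dY (h \o f \o hinv) := dcont_comp (dcont_comp hic fc) hc.
have gic : dcontinuous dY dY (h \o finv \o hinv) := dcont_comp (dcont_comp hic fic) hc.
have sub : h @^-1` Gamma dY (h \o f \o hinv) (h \o finv \o hinv) (h x) (c1/2) z'
    `<=` Gamma dX f finv x c (hinv z').
  move=> y [hy hn]; split.
    have := hc1 (h x) (h y) (ltac:(rewrite /dball /= in hy; lra)).
    by rewrite !hK.
  move=> n; have := hn n; rewrite !fz_conj // hK => H.
  have := hc1 _ _ (ltac:(lra) : dY (h (fz f finv n y)) (h (fz f finv n (hinv z'))) < c1).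
  by rewrite !hK => /ltW.
have hB : borel dX (h @^-1` Gamma dY (h \o f \o hinv) (h \o finv \o hinv) (h x) (c1/2) z').
  apply: (borel_preimage hc); exact: Gamma_borel.
have bz : dball dX x c (hinv z').
  have := hc1 (h x) z' (ltac:(rewrite /dball /= in hz'; lra)).
  by rewrite hK.
have [_ [mupos _]] := bm.
apply/eqP; rewrite eq_le; apply/andP; split; last exact: mupos.
rewrite -(hx (hinv z') bz).
apply: (mu_mono bm hB _ sub); exact: Gamma_borel.
Qed.

Lemma Sh_sub (X Y : Type) (dX : X -> X -> R) (dY : Y -> Y -> R)
  (f finv : X -> X) (mu : set X -> \bar R) (h : X -> Y) (hinv : Y -> X) :
  compact_metric dX -> compact_metric dY -> homeo dX dX f finv ->
  homeo dX dY h hinv ->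
  h @` Sh dX mu f finv `<=` Sh dY (pushmeasure mu h) (h \o f \o hinv) (h \o finv \o hinv).
Proof.
move=> [hX cX] [hY cY] [_ [_ [fc fic]]] [hK [hiK [hc hic]]].
move=> _ [x hx <-] eps' eps0.
have [e [e0 he]] := unif_cont (conj hX cX) hY hc eps0.
have [del [del0 [B [bB [muB hB]]]]] := hx e e0.
have [del1 [del10 hdel1]] := unif_cont (conj hY cY) hX hic del0.
exists del1; split => //; exists (hinv @^-1` B); split; first exact: borel_preimage hic bB.
split.
  rewrite /pushmeasure.
  have -> : h @^-1` (~` (hinv @^-1` B)) = ~` B.
    by apply/seteqP; split => y /=; rewrite hK.
  exact: muB.
move=> ys po Bys0 bys0.
have po' : pseudo_orbit dX f del (hinv \o ys).
  move=> n /=; have := hdel1 _ _ (po n); by rewrite /= hK.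
have b0 : dball dX x del ((hinv \o ys) 0).
  by have := hdel1 _ _ bys0; rewrite hK.
have [y hy] := hB (hinv \o ys) po' Bys0 b0.
exists (h y) => n; rewrite fz_conj // hK.
by have := he _ _ (hy n); rewrite /= hiK.
Qed.

End Aux.

Unset Implicit Arguments.

Theorem proposition3p5 (R : realType) (X Y : Type)
  (dX : X -> X -> R) (dY : Y -> Y -> R)
  (f finv : X -> X) (mu : set X -> \bar R) (h : X -> Y) (hinv : Y -> X) :
  compact_metric dX -> compact_metric dY ->
  homeo dX dX f finv ->
  borel_measure dX mu -> (0 < mu setT)%E ->
  homeo dX dY h hinv ->
  UE dY (pushmeasure mu h) (h \o f \o hinv) (h \o finv \o hinv)
    = h @` UE dX mu f finv /\
  Sh dY (pushmeasure mu h) (h \o f \o hinv) (h \o finv \o hinv)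
    = h @` Sh dX mu f finv.
Proof.
move=> cX cY fH bm _ hH.
have [hK [hiK [hc hic]]] := hH.
have [fK [fiK [fc fic]]] := fH.
have gH : homeo dY dY (h \o f \o hinv) (h \o finv \o hinv).
  split; first by move=> y /=; rewrite hK fK hiK.
  split; first by move=> y /=; rewrite hK fiK hiK.
  by split; [exact: (dcont_comp hic (dcont_comp fc hc)) | exact: (dcont_comp hic (dcont_comp fic hc))].
have hH' : homeo dY dX hinv h by [].
have bm' : borel_measure dY (pushmeasure mu h).
  have [mu0 [mupos mucv]] := bm.
  split; first by rewrite /pushmeasure preimage_set0.
  split; first by move=> A hA; apply: mupos; apply: borel_preimage hc hA.
  move=> F hF tF; rewrite /pushmeasure preimage_bigcup.
  apply: mucv; first by move=> n; apply: borel_preimage hc (hF n).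
  move=> i j _ _ [x [hi hj]]; apply: tF => //; by exists (h x).
have e1 : pushmeasure (pushmeasure mu h) hinv = mu.
  apply: funext => A; rewrite /pushmeasure; congr mu.
  by apply/seteqP; split => x /=; rewrite hK.
have e2 : forall p : X -> X, hinv \o (h \o p \o hinv) \o h = p.
  by move=> p; apply: funext => x /=; rewrite !hK.
split; rewrite eqEsubset; split.
- move=> y Uy.
  have := UE_sub cY cX gH hH' bm' (imageP hinv Uy); rewrite e1 !e2 => H.
  by exists (hinv y) => //; rewrite hiK.
- exact: UE_sub.
- move=> y Uy.
  have := Sh_sub cY cX gH hH' (imageP hinv Uy); rewrite e1 !e2 => H.
  by exists (hinv y) => //; rewrite hiK.
- exact: Sh_sub.
Qed.
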